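(* Let $p,q\ge1$, $\alpha:\mathbb Z_p\times\mathbb Z_q\to[0,1]$ a probability distribution with $\alpha(0,0)=0$, and let $\tilde{\mathcal T}_{*t}=e^{t\tilde{\mathcal L}_*}$ with $\tilde{\mathcal L}_*(x)=\sum_{(i,j)}\alpha(i,j)(J_p^i\otimes J_q^j)x(J_p^i\otimes J_q^j)^*-x$ on $\mathcal M_p(\mathbb C)\otimes\mathcal M_q(\mathbb C)$ (the pre-dual of the $\rho$-adjoint, $\rho=\frac{1}{pq}\mathbf1$, of the generator of the circulant semigroup $e^{t\mathcal L_*}$, $\mathcal L_*(x)=\sum_{(i,j)}\alpha(p-i,q-j)(J_p^i\otimes J_q^j)x(J_p^i\otimes J_q^j)^*-x$). With $\Phi_{m,n}(t)$ as below, for all $(i,j),(i',j')$ and $t\ge0$: (i) $\tilde{\mathcal T}_{*t}(|e_i\otimes e_j\rangle\langle e_{i'}\otimes e_{j'}|)=\frac{1}{pq}\sum_{m,n}\Phi_{p-m,q-n}(t)|e_{m+i}\otimes e_{n+j}\rangle\langle e_{m+i'}\otimes e_{n+j'}|$; equivalently, on each subspace $\mathrm{span}\{|e_i\otimes e_j\rangle\langle e_{i+k}\otimes e_{j+l}|\}$ the action corresponds to $e_i\otimes e_j\mapsto(e_i\otimes e_j)e^{tQ^{T}}$, $Q^T$ the transpose of $Q=\sum_{i,j}\alpha'(i,j)J_p^i\otimes J_q^j$; (ii) $\tilde\Omega_t=\frac{1}{pq}\sum_{m,n}\Phi_{p-m,q-n}(t)|u_{mn}\rangle\langle u_{mn}|$,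 where $u_{mn}=\frac{1}{\sqrt{pq}}\sum_{i,j}(e_i\otimes e_j)\otimes(e_{m+i}\otimes e_{n+j})$.
   Context: $\{e_j\}$ canonical bases (indices mod $p$, $q$); $J_p=\sum_j|e_j\rangle\langle e_{j+1}|$, similarly $J_q$; $\omega_p,\omega_q$ primitive roots of unity. $\alpha'(i,j)=\alpha(i,j)$ for $(i,j)\ne(0,0)$, $\alpha'(0,0)=-1$; $\lambda_{kl}=\sum_{i,j}\alpha'(i,j)\overline\omega_p^{ik}\overline\omega_q^{jl}$; $\Phi_{m,n}(t)=\sum_{k,l}\omega_p^{mk}\omega_q^{nl}e^{t\lambda_{kl}}$ (indices mod $p,q$). $\Omega_\rho=\frac{1}{\sqrt{pq}}\sum_{i,j}(e_i\otimes e_j)\otimes(e_i\otimes e_j)$ and $\tilde\Omega_t=(\mathrm{id}\otimes\tilde{\mathcal T}_{*t})(|\Omega_\rho\rangle\langle\Omega_\rho|)$. *)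

(* Defs.v *)
From HB Require Import structures.
From mathcomp Require Import all_boot all_order all_algebra.
From mathcomp Require Import all_classical all_reals all_analysis.
From mathcomp Require Import complex mxtens.
Set Implicit Arguments.
Unset Strict Implicit.
Unset Printing Implicit Defensive.
Import Order.TTheory GRing.Theory Num.Theory.
Import numFieldNormedType.Exports.
Local Open Scope ring_scope.
Local Open Scope complex_scope.

Definition cexp (R : realType) (z : R[i]) : R[i] :=
  limn (fun N => \sum_(k < N) ((z ^+ k / (k`!)%:R) : R[i]^o)).

Definition opexp (R : realType) (n : nat) (t : R)
  (L : 'M[R[i]]_n -> 'M[R[i]]_n) (x : 'M[R[i]]_n) : 'M[R[i]]_n :=
  limn (fun N => \sum_(k < N) ((t ^+ k / (k`!)%:R)%:C *: iter k L x)).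

Definition adj (R : realType) (m n : nat) (A : 'M[R[i]]_(m, n)) : 'M[R[i]]_(n, m) :=
  \matrix_(i, j) (A j i)^*.

Definition dyad (R : realType) (m : nat) (v w : 'cV[R[i]]_m) : 'M[R[i]]_m :=
  v *m adj w.

Definition e (R : realType) (p i : nat) : 'cV[R[i]]_p :=
  \col_(k < p) ((k == (i %% p)%N :> nat)%:R).

Definition Jmx (R : realType) (p : nat) : 'M[R[i]]_p :=
  \sum_(j < p) dyad (e R p j) (e R p j.+1).

Definition ket2 (R : realType) (p q i j : nat) : 'cV[R[i]]_(p * q) :=
  tensmx (e R p i) (e R q j).

Definition Umx (R : realType) (p q i j : nat) : 'M[R[i]]_(p * q) :=
  tensmx (Jmx R p ^+ i) (Jmx R q ^+ j).

Definition Ltilde (R : realType) (p q : nat) (alpha : 'I_p -> 'I_q -> R)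
  (x : 'M[R[i]]_(p * q)) : 'M[R[i]]_(p * q) :=
  \sum_(i < p) \sum_(j < q)
     ((alpha i j)%:C *: (Umx R p q i j *m x *m adj (Umx R p q i j))) - x.

Definition Ttilde (R : realType) (p q : nat) (alpha : 'I_p -> 'I_q -> R) (t : R)
  (x : 'M[R[i]]_(p * q)) : 'M[R[i]]_(p * q) :=
  opexp t (Ltilde alpha) x.

Definition alpha' (R : realType) (p q : nat) (alpha : 'I_p -> 'I_q -> R)
  (i : 'I_p) (j : 'I_q) : R[i] :=
  if (i == 0 :> nat) && (j == 0 :> nat) then -1 else (alpha i j)%:C.

Definition lambda (R : realType) (p q : nat) (alpha : 'I_p -> 'I_q -> R)
  (wp wq : R[i]) (k l : nat) : R[i] :=
  \sum_(i < p) \sum_(j < q)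
     alpha' alpha i j * (wp^*) ^+ (i * k) * (wq^*) ^+ (j * l).

Definition Phi (R : realType) (p q : nat) (alpha : 'I_p -> 'I_q -> R)
  (wp wq : R[i]) (m n : nat) (t : R) : R[i] :=
  \sum_(k < p) \sum_(l < q)
     wp ^+ (m * k) * wq ^+ (n * l) * cexp (t%:C * lambda alpha wp wq k l).

(* (id (x) T) on M_n (x) M_n = M_(n*n) (Kronecker identification):
   E_ab (x) Y  |->  E_ab (x) T(Y) *)
Definition idtens (R : realType) (n : nat) (T : 'M[R[i]]_n -> 'M[R[i]]_n)
  (X : 'M[R[i]]_(n * n)) : 'M[R[i]]_(n * n) :=
  \sum_(a < n) \sum_(b < n)
     tensmx (delta_mx a b)
       (T (\matrix_(c < n, d < n) X (mxtens_index (a, c)) (mxtens_index (b, d)))).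

Definition uvec (R : realType) (p q m n : nat) : 'cV[R[i]]_((p * q) * (p * q)) :=
  (Num.sqrt ((p * q)%:R : R))^-1%:C *:
    \sum_(i < p) \sum_(j < q) tensmx (ket2 R p q i j) (ket2 R p q (m + i) (n + j)).

Definition Omega_rho (R : realType) (p q : nat) : 'cV[R[i]]_((p * q) * (p * q)) :=
  (Num.sqrt ((p * q)%:R : R))^-1%:C *:
    \sum_(i < p) \sum_(j < q) tensmx (ket2 R p q i j) (ket2 R p q i j).

Definition Omega_tilde (R : realType) (p q : nat) (alpha : 'I_p -> 'I_q -> R) (t : R)
  : 'M[R[i]]_((p * q) * (p * q)) :=
  idtens (Ttilde alpha t) (dyad (Omega_rho R p q) (Omega_rho R p q)).

(* Main.v *)
Require Import Defs.
From HB Require Import structures.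
From mathcomp Require Import all_boot all_order all_algebra.
From mathcomp Require Import all_classical all_reals all_analysis.
From mathcomp Require Import complex mxtens.
Import Order.TTheory GRing.Theory Num.Theory.
Import numFieldNormedType.Exports.
Import ComplexField.Normc.

Local Open Scope ring_scope.
Local Open Scope complex_scope.
Local Open Scope classical_set_scope.
Local Open Scope ring_scope.

Section CExp.
Variable R : realType.

Lemma normC_real (x : R) : `|x%:C| = `|x|%:C :> R[i].
Proof. by rewrite normc_def /= expr0n addr0 sqrtr_sqr. Qed.

Lemma cvg_realC (u : nat -> R) (l : R) :
  u @ \oo --> l -> (fun n => (u n)%:C : R[i]^o) @ \oo --> (l%:C : R[i]^o).
Proof.
move=> /cvgrPdist_lt cu; apply/cvgrPdist_lt => e e0.
have [he Re0] : complex.Im e = 0 /\ 0 < complex.Re e.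
  by move: e0; rewrite ltcE /= => /andP[/eqP -> ->].
have := cu _ Re0; apply: filterS => n hn.
have -> : e = (complex.Re e)%:C by case: e e0 he {Re0 hn} => a b /= _ ->.
by rewrite -rmorphB /= normC_real ltcR.
Qed.

Lemma cvg_ReIm (f : nat -> R[i]^o) :
  cvgn (fun n => complex.Re (f n)) -> cvgn (fun n => complex.Im (f n)) -> cvgn f.
Proof.
move=> /cvg_ex[a ha] /cvg_ex[b hb]; apply/cvg_ex; exists (a%:C + 'i * b%:C).
have -> : f = (fun n => (complex.Re (f n))%:C + 'i * (complex.Im (f n))%:C).
  by apply: funext => n; rewrite -complexE.
apply: cvgD; first exact: cvg_realC.
by apply: cvgMl_tmp; exact: cvg_realC.
Qed.

End CExp.

Section CExp2.
Variable R : realType.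

Lemma ReD (x y : R[i]) : complex.Re (x + y) = complex.Re x + complex.Re y.
Proof. by case: x; case: y. Qed.
Lemma ImD (x y : R[i]) : complex.Im (x + y) = complex.Im x + complex.Im y.
Proof. by case: x; case: y. Qed.

Lemma normc_bound (w : R[i]) :
  `|complex.Re w| <= normc w /\ `|complex.Im w| <= normc w.
Proof.
case: w => a b /=; split.
  rewrite -sqrtr_sqr ler_wsqrtr // lerDl sqr_ge0 //.
rewrite -sqrtr_sqr ler_wsqrtr // lerDr sqr_ge0 //.
Qed.

Lemma normcX (z : R[i]) k : normc (z ^+ k) = normc z ^+ k.
Proof. by elim: k => [|k IH]; rewrite ?expr0 ?normc1 // !exprS normcM IH. Qed.

Lemma normc_nat k : normc (k%:R : R[i]) = k%:R.
Proof.
have -> : (k%:R : R[i]) = (k%:R : R)%:C by rewrite rmorph_nat.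
by rewrite /normc /= expr0n addr0 sqrtr_sqr ger0_norm // ler0n.
Qed.

Lemma normc_term (z : R[i]) k :
  normc (z ^+ k / (k`!)%:R) = (normc z) ^+ k / (k`!)%:R.
Proof. by rewrite normcM normcV normcX normc_nat. Qed.

Lemma cexp_cvg (z : R[i]) :
  cvgn (fun N => \sum_(k < N) ((z ^+ k / (k`!)%:R) : R[i]^o)).
Proof.
have hser : forall (g : R[i] -> R), (forall w, `|g w| <= normc w) ->
    {morph g : x y / x + y} -> g 0 = 0 ->
    cvgn (fun N => g (\sum_(k < N) ((z ^+ k / (k`!)%:R) : R[i]^o))).
  move=> g gb gD g0.
  have -> : (fun N => g (\sum_(k < N) ((z ^+ k / (k`!)%:R) : R[i]^o))) =
      series (fun k => g (z ^+ k / (k`!)%:R)).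
    apply: funext => N; rewrite /series /= big_mkord.
    exact: (big_morph g gD g0).
  apply: normed_cvg.
  apply: (@series_le_cvg _ _ (exp_coeff (normc z))) => //.
  - by move=> n; exact: normr_ge0.
  - move=> n; rewrite /exp_coeff /= mulr_ge0 // ?invr_ge0 ?ler0n // exprn_ge0 //.
    by case: (z) => a b; rewrite /normc sqrtr_ge0.
  - by move=> n; rewrite /exp_coeff /= -normc_term; apply: gb.
  - exact: is_cvg_series_exp_coeff.
apply: cvg_ReIm.
  apply: (hser (fun w => complex.Re w)) => //.
  - by move=> w; case: (normc_bound w).
  - exact: ReD.
apply: (hser (fun w => complex.Im w)) => //.
- by move=> w; case: (normc_bound w).
- exact: ImD.
Qed.

End CExp2.

Local Open Scope ring_scope.
Local Open Scope complex_scope.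

Section Alg.
Variable R : realType.
Local Notation C := (R[i]).

Lemma mulmx_cv_rv_entry m n (v : 'cV[C]_m) (w : 'rV[C]_n) r c :
  (v *m w) r c = v r 0 * w 0 c.
Proof. by rewrite !mxE big_ord1. Qed.

Lemma e_entry p i r : e R p i r 0 = ((r : nat) == (i %% p)%N)%:R.
Proof. by rewrite mxE. Qed.

Lemma e_mod p i : e R p (i %% p) = e R p i.
Proof. by rewrite /e modn_mod. Qed.

Lemma e_eqmod p i j : i = j %[mod p] -> e R p i = e R p j.
Proof. by move=> h; rewrite -e_mod h e_mod. Qed.

Lemma adjM m n k (A : 'M[C]_(m, n)) (B : 'M[C]_(n, k)) :
  adj (A *m B) = adj B *m adj A.
Proof.
apply/matrixP => i j; rewrite !mxE rmorph_sum; apply: eq_bigr => l _.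
by rewrite !mxE rmorphM mulrC.
Qed.

Lemma adjZ m n c (A : 'M[C]_(m, n)) : adj (c *: A) = c^* *: adj A.
Proof. by apply/matrixP => i j; rewrite !mxE rmorphM. Qed.

Lemma adjD m n (A B : 'M[C]_(m, n)) : adj (A + B) = adj A + adj B.
Proof. by apply/matrixP => i j; rewrite !mxE rmorphD. Qed.

Lemma adj_tens m n k l (A : 'M[C]_(m, n)) (B : 'M[C]_(k, l)) :
  adj (tensmx A B) = tensmx (adj A) (adj B).
Proof. by apply/matrixP => i j; rewrite !mxE rmorphM. Qed.

Lemma adj_e p i : adj (e R p i) = (e R p i)^T.
Proof. by apply/matrixP => a b; rewrite !mxE conjc_nat. Qed.

Lemma Jmx_entry p r c : Jmx R p r c = ((c : nat) == (r.+1 %% p)%N)%:R.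
Proof.
rewrite /Jmx summxE (bigD1 r) //= big1 ?addr0.
  by rewrite /dyad mulmx_cv_rv_entry adj_e !mxE modn_small // eqxx mul1r.
move=> j jr; rewrite /dyad mulmx_cv_rv_entry !mxE modn_small //.
by rewrite (_ : (r == j :> nat) = false) ?mul0r //; apply/negbTE; rewrite val_eqE eq_sym.
Qed.


Lemma Jmx_e p x : (0 < p)%N -> Jmx R p *m e R p x = e R p (x + p.-1).
Proof.
move=> p0; apply/matrixP => r c; rewrite [c]ord1 !mxE.
rewrite (bigD1 (Ordinal (ltn_pmod r.+1 p0))) //= big1 ?addr0.
  rewrite Jmx_entry !mxE /= eqxx mul1r; congr (_%:R).
  rewrite -{2}(modn_small (ltn_ord r)) -(eqn_modDr 1 r) addn1 -addnA addn1 prednK //.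
  by rewrite modnDr.
move=> j hj; rewrite Jmx_entry !mxE.
case: eqP => [hc|]; last by rewrite mul0r.
by move: hj; rewrite -val_eqE /= -hc eqxx.
Qed.

Lemma Jpow_e p x a : (0 < p)%N ->
  Jmx R p ^+ a *m e R p x = e R p (x + a * p.-1).
Proof.
move=> p0; elim: a => [|a IH]; first by rewrite expr0 mul1mx mul0n addn0.
rewrite exprS -mulmxA IH Jmx_e // mulSn; congr (e R p _); by rewrite -addnA (addnC (a * p.-1)).
Qed.

Lemma Jpow_e' p x (a : 'I_p) :
  Jmx R p ^+ a *m e R p x = e R p (x + (p - a)).
Proof.
have p0 : (0 < p)%N by case: a => /= a; case: p => //.
rewrite Jpow_e //; apply: e_eqmod; apply/eqP.
have h : forall a' : nat, (a' * p.-1 + a' = a' * p)%N.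
  by move=> a'; rewrite -mulnSr prednK.
rewrite -(eqn_modDr a) -addnA -addnA subnK; last exact: ltnW.
by rewrite modnDr h addnC modnMDl.
Qed.

Lemma Umx_ket2 p q (a : 'I_p) (b : 'I_q) x y :
  Umx R p q a b *m ket2 R p q x y = ket2 R p q (x + (p - a)) (y + (q - b)).
Proof.
have := @tensmx_mul C p p q q 1 1 (Jmx R p ^+ a) (Jmx R q ^+ b) (e R p x) (e R q y).
rewrite !Jpow_e' => h; exact: h.
Qed.

Lemma dyad_conj n (U : 'M[C]_n) v w :
  U *m dyad v w *m adj U = dyad (U *m v) (U *m w).
Proof. by rewrite /dyad adjM !mulmxA. Qed.

Lemma shift1 (M : GRing.Zmodule.type) p (g : nat -> M) : g p = g 0%N ->
  \sum_(m < p) g m.+1 = \sum_(m < p) g m.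
Proof.
case: p => [|p] gp; first by rewrite !big_ord0.
by rewrite big_ord_recr big_ord_recl /= gp addrC.
Qed.

Lemma shift_sum (M : GRing.Zmodule.type) p (h : nat -> M) s :
  (forall m, h (m + p)%N = h m) ->
  \sum_(m < p) h (m + s)%N = \sum_(m < p) h m.
Proof.
move=> hp; elim: s h hp => [|s IH] h hp; first by apply: eq_bigr => m _; rewrite addn0.
transitivity (\sum_(m < p) h (m + s)%N.+1).
  by apply: eq_bigr => m _; rewrite addnS.
rewrite (@shift1 M p (fun m => h (m + s)%N)) /=; first exact: IH.
by rewrite add0n addnC hp.
Qed.
End Alg.

Local Open Scope ring_scope.
Local Open Scope complex_scope.

Section Eigen.
Variable R : realType.
Local Notation C := (R[i]).
Variables (p q : nat) (hp : (0 < p)%N) (hq : (0 < q)%N).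
Variable alpha : 'I_p -> 'I_q -> R.
Hypothesis alpha00 : forall (i : 'I_p) (j : 'I_q),
     (i = 0 :> nat) -> (j = 0 :> nat) -> alpha i j = 0.
Variables (wp wq : C).
Hypotheses (hwp : p.-primitive_root wp) (hwq : q.-primitive_root wq).

Lemma root_conj_exp n (w : C) : n.-primitive_root w -> (w^*)^+n = 1.
Proof. by move=> hw; rewrite -rmorphXn (prim_expr_order hw) rmorph1. Qed.

Lemma root_mulconj n (w : C) : (0 < n)%N -> n.-primitive_root w -> w * w^* = 1.
Proof.
move=> n0 hw; rewrite -sqr_normc.
have : `|w| ^+ n == 1 by rewrite -normrX (prim_expr_order hw) normr1.
by rewrite pexpr_eq1 // => /eqP ->; rewrite expr1n.
Qed.

Lemma Ltilde_lin c x y : Ltilde alpha (c *: x + y) = c *: Ltilde alpha x + Ltilde alpha y.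
Proof.
rewrite /Ltilde.
under eq_bigr do under eq_bigr do
  rewrite mulmxDr mulmxDl -scalemxAr -scalemxAl scalerDr scalerA mulrC -scalerA.
under eq_bigr do rewrite big_split /=.
under eq_bigr do rewrite -scaler_sumr.
by rewrite big_split /= -scaler_sumr scalerBr opprD addrACA.
Qed.

Lemma Ltilde0 : Ltilde alpha 0 = 0.
Proof.
rewrite /Ltilde subr0 big1 // => a _; rewrite big1 // => b _.
by rewrite mulmx0 mul0mx scaler0.
Qed.

Lemma Ltilde_scale c x : Ltilde alpha (c *: x) = c *: Ltilde alpha x.
Proof. by rewrite -(addr0 (c *: x)) Ltilde_lin Ltilde0 addr0. Qed.


Lemma tensmx11 m n : tensmx (1 : 'M[C]_m) (1 : 'M[C]_n) = 1.
Proof.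
apply/matrixP => r c.
case: (mxtens_indexP r) => r1 r2; case: (mxtens_indexP c) => c1 c2.
rewrite tensmxE !mxE -natrM mulnb; congr (_%:R); congr nat_of_bool.
apply/idP/eqP => [/andP[/eqP -> /eqP ->] //|/(can_inj (@mxtens_indexK _ _))].
by case=> -> ->; rewrite !eqxx.
Qed.

Lemma adj1 n : adj (1 : 'M[C]_n) = 1.
Proof. by apply/matrixP => a b; rewrite !mxE conjc_nat eq_sym. Qed.

Lemma Ltilde_alt x : Ltilde alpha x =
  \sum_(a < p) \sum_(b < q) alpha' alpha a b *: (Umx R p q a b *m x *m adj (Umx R p q a b)).
Proof.
pose M a b := Umx R p q a b *m x *m adj (Umx R p q a b).
have -> : \sum_(a < p) \sum_(b < q) alpha' alpha a b *: M a b =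
   \sum_(a < p) \sum_(b < q) ((alpha a b)%:C *: M a b) +
   \sum_(a < p) \sum_(b < q) ((alpha' alpha a b - (alpha a b)%:C) *: M a b).
  rewrite -big_split; apply: eq_bigr => a _; rewrite -big_split; apply: eq_bigr => b _.
  by rewrite /= -scalerDl addrC subrK.
rewrite /Ltilde; congr (_ + _).
rewrite (bigD1 (Ordinal hp)) //= [X in _ + X]big1 ?addr0; last first.
  move=> a ha; apply: big1 => b _; rewrite /alpha'.
  have -> : ((a : nat) == 0%N) = false.
    by apply/negbTE; move: ha; apply: contra => /eqP h; apply/eqP/val_inj.
  by rewrite /= subrr scale0r.
rewrite (bigD1 (Ordinal hq)) //= big1 ?addr0; last first.
  move=> b hb; rewrite /alpha'.
  have -> : ((b : nat) == 0%N) = false.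
    by apply/negbTE; move: hb; apply: contra => /eqP h; apply/eqP/val_inj.
  by rewrite /= subrr scale0r.
rewrite /alpha' /= alpha00 // subr0 scaleN1r /M /Umx !expr0 tensmx11 adj1.
by rewrite mul1mx mulmx1.
Qed.

Lemma pow_per (w : C) N m k : w ^+ N = 1 -> w ^+ ((m + N) * k) = w ^+ (m * k).
Proof. by move=> h; rewrite mulnDl exprD (exprM w N k) h expr1n mulr1. Qed.

Section Fixed.
Variables i j i' j' : nat.

Definition Em (m n : nat) :=
  dyad (ket2 R p q (m + i) (n + j)) (ket2 R p q (m + i') (n + j')).
Definition cf (k l m n : nat) : C := (wp^*)^+(m * k) * (wq^*)^+(n * l).
Definition Vv (k l : nat) := \sum_(m < p) \sum_(n < q) cf k l m n *: Em m n.

Lemma U_Em (a : 'I_p) (b : 'I_q) m n :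
  Umx R p q a b *m Em m n *m adj (Umx R p q a b) = Em (m + (p - a)) (n + (q - b)).
Proof. by rewrite /Em dyad_conj !Umx_ket2 ![(_ + _ + (_ - _))%N]addnAC. Qed.

Lemma ket2_per_m m n : ket2 R p q (m + p) n = ket2 R p q m n.
Proof. by rewrite /ket2 (@e_eqmod R p (m + p) m) // modnDr. Qed.
Lemma ket2_per_n m n : ket2 R p q m (n + q) = ket2 R p q m n.
Proof. by rewrite /ket2 (@e_eqmod R q (n + q) n) // modnDr. Qed.

Lemma Em_per_m m n : Em (m + p) n = Em m n.
Proof. by rewrite /Em !(addnAC m p) !ket2_per_m. Qed.
Lemma Em_per_n m n : Em m (n + q) = Em m n.
Proof. by rewrite /Em !(addnAC n q) !ket2_per_n. Qed.

Lemma cf_per_m k l m n : cf k l (m + p) n = cf k l m n.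
Proof. by rewrite /cf pow_per // (@root_conj_exp p wp hwp). Qed.
Lemma cf_per_n k l m n : cf k l m (n + q) = cf k l m n.
Proof. by rewrite /cf (@pow_per _ q) // (@root_conj_exp q wq hwq). Qed.

Lemma cf_shift k l (a : 'I_p) (b : 'I_q) m n :
  cf k l m n = ((wp^*)^+(a * k) * (wq^*)^+(b * l)) * cf k l (m + (p - a)) (n + (q - b)).
Proof.
have e1 : (a + (m + (p - a)) = m + p)%N by rewrite addnCA subnKC // ltnW.
have e2 : (b + (n + (q - b)) = n + q)%N by rewrite addnCA subnKC // ltnW.
rewrite /cf mulrACA -!exprD -!mulnDl e1 e2.
rewrite (pow_per _ _ m k (@root_conj_exp p wp hwp)).
by rewrite (pow_per _ _ n l (@root_conj_exp q wq hwq)).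
Qed.

Lemma UV (a : 'I_p) (b : 'I_q) k l :
  Umx R p q a b *m Vv k l *m adj (Umx R p q a b) =
  ((wp^*)^+(a * k) * (wq^*)^+(b * l)) *: Vv k l.
Proof.
rewrite /Vv mulmx_sumr mulmx_suml.
under eq_bigr do rewrite mulmx_sumr mulmx_suml.
under eq_bigr do under eq_bigr do rewrite -scalemxAr -scalemxAl U_Em.
have H : forall m n, cf k l m n *: Em (m + (p - a)) (n + (q - b)) =
   ((wp^*)^+(a * k) * (wq^*)^+(b * l)) *:
     (cf k l (m + (p - a)) (n + (q - b)) *: Em (m + (p - a)) (n + (q - b))).
  by move=> m n; rewrite scalerA -cf_shift.
under eq_bigr do under eq_bigr do rewrite H.
under eq_bigr do rewrite -scaler_sumr.
rewrite -scaler_sumr; congr (_ *: _).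
have H2 : forall m, \sum_(n < q) cf k l (m + (p - a)) (n + (q - b)) *: Em (m + (p - a)) (n + (q - b))
   = \sum_(n < q) cf k l (m + (p - a)) n *: Em (m + (p - a)) n.
  move=> m; apply: (@shift_sum _ q (fun n => cf k l (m + (p - a)) n *: Em (m + (p - a)) n)).
  by move=> n; rewrite cf_per_n Em_per_n.
under eq_bigr do rewrite H2.
apply: (@shift_sum _ p (fun m => \sum_(n < q) cf k l m n *: Em m n)).
by move=> m; apply: eq_bigr => n _; rewrite cf_per_m Em_per_m.
Qed.

Lemma L_V k l : Ltilde alpha (Vv k l) = lambda alpha wp wq k l *: Vv k l.
Proof.
rewrite Ltilde_alt /lambda scaler_suml; apply: eq_bigr => a _.
rewrite scaler_suml; apply: eq_bigr => b _.
by rewrite UV scalerA !mulrA.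
Qed.

End Fixed.
End Eigen.

Local Open Scope ring_scope.
Local Open Scope complex_scope.
Local Open Scope classical_set_scope.
Local Open Scope ring_scope.

Lemma gen_lim (K : numFieldType) (W : normedModType K) (f : nat -> W) l :
  f @ \oo --> l -> limn f = l.
Proof. by move=> h; apply: cvg_lim. Qed.

Definition MN (R : realType) n : normedModType R[i] :=
  matrix_matrix__canonical__normed_module_NormedModule R[i] n n.

Lemma opexp_cvg (R : realType) n (L : 'M[R[i]]_n -> 'M[R[i]]_n) x v t :
  (fun N => \sum_(k < N) ((t ^+ k / (k`!)%:R)%:C *: iter k L x) : MN R n) @ \oo -->
    (v : MN R n) -> opexp t L x = v.
Proof. by move=> h; rewrite /opexp; exact: (@gen_lim _ (MN R n) _ _ h). Qed.

Section Part1.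
Variable R : realType.
Local Notation C := (R[i]).

Lemma root_sum (w : C) N m : N.-primitive_root w -> (m < N)%N ->
  \sum_(k < N) (w^*) ^+ (m * k) = if m == 0%N then N%:R else 0.
Proof.
move=> hw hm; case: eqP => [->|m0].
  by under eq_bigr do rewrite mul0n expr0; rewrite sumr_const card_ord.
pose x := (w^*) ^+ m.
have xN : x ^+ N = 1 by rewrite /x -exprM mulnC exprM (root_conj_exp _ _ _ hw) expr1n.
have x1 : x - 1 != 0.
  rewrite subr_eq0; apply/negP => /eqP hx.
  have : w ^+ m = 1.
    by rewrite -(conjcK (w ^+ m)) rmorphXn /= -/x hx rmorph1.
  move/eqP; rewrite -(prim_order_dvd hw) => /dvdn_leq.
  by case: (m) m0 hm => // m' _ hm /(_ isT); rewrite leqNgt hm.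
under eq_bigr do rewrite exprM -/x.
have := subrX1 x N; rewrite xN subrr => /esym /eqP.
by rewrite mulf_eq0 (negbTE x1) /= => /eqP.
Qed.


Lemma swap4 (M : GRing.Zmodule.type) a b c d (F : 'I_a -> 'I_b -> 'I_c -> 'I_d -> M) :
  \sum_k \sum_l \sum_m \sum_n F k l m n = \sum_m \sum_n \sum_k \sum_l F k l m n.
Proof.
under eq_bigr do rewrite exchange_big.
rewrite exchange_big.
under eq_bigr do under eq_bigr do rewrite exchange_big.
by under eq_bigr do rewrite exchange_big.
Qed.

Lemma wconj (w : C) N m k : w ^+ N = 1 -> w * w^* = 1 -> (m <= N)%N ->
  w ^+ ((N - m) * k) = (w^*) ^+ (m * k).
Proof.
move=> wN wc mN.
rewrite -[LHS]mulr1 -(expr1n _ (m * k)) -wc exprMn mulrA -exprD -mulnDl subnK //.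
by rewrite exprM wN expr1n mul1r.
Qed.

Section Main.
Variables (p q : nat) (hp : (0 < p)%N) (hq : (0 < q)%N).
Variable alpha : 'I_p -> 'I_q -> R.
Hypothesis alpha00 : forall (i : 'I_p) (j : 'I_q),
     (i = 0 :> nat) -> (j = 0 :> nat) -> alpha i j = 0.
Variables (wp wq : C).
Hypotheses (hwp : p.-primitive_root wp) (hwq : q.-primitive_root wq).
Variables i j i' j' : nat.
Local Notation V := (Vv R p q wp wq i j i' j').
Local Notation E := (Em R p q i j i' j').
Local Notation lam := (lambda alpha wp wq).
Local Notation L := (Ltilde alpha).

Lemma L_add x y : L (x + y) = L x + L y.
Proof. by have := Ltilde_lin _ _ _ alpha 1 x y; rewrite !scale1r. Qed.

Lemma L_sum (I : finType) (F : I -> 'M[C]_(p * q)) : L (\sum_k F k) = \sum_k L (F k).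
Proof. exact: (big_morph L L_add (Ltilde0 _ _ _ alpha)). Qed.

Lemma iter_V N (c : nat -> nat -> C) :
  iter N L (\sum_(k < p) \sum_(l < q) c k l *: V k l) =
  \sum_(k < p) \sum_(l < q) (c k l * lam k l ^+ N) *: V k l.
Proof.
elim: N => [|N IH].
  by apply: eq_bigr => k _; apply: eq_bigr => l _; rewrite expr0 mulr1.
rewrite iterS IH L_sum; apply: eq_bigr => k _; rewrite L_sum; apply: eq_bigr => l _.
by rewrite Ltilde_scale (L_V _ _ _ hp hq _ alpha00 _ _ hwp hwq) scalerA exprSr mulrA.
Qed.

Lemma pq_neq0 : ((p * q)%:R : C) != 0.
Proof. by rewrite pnatr_eq0 muln_eq0 negb_or -!lt0n hp hq. Qed.

Lemma decomp : dyad (ket2 R p q i j) (ket2 R p q i' j') =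
  \sum_(k < p) \sum_(l < q) ((p * q)%:R^-1) *: V k l.
Proof.
have -> : dyad (ket2 R p q i j) (ket2 R p q i' j') = E 0 0 by rewrite /Em !add0n.
under eq_bigr do rewrite -scaler_sumr.
rewrite -scaler_sumr /Vv swap4.
have H : forall (m : 'I_p) (n : 'I_q), \sum_(k < p) \sum_(l < q) cf R wp wq k l m n *: E m n =
    ((if (m : nat) == 0%N then p%:R else 0) * (if (n : nat) == 0%N then q%:R else 0)) *: E m n.
  move=> m n; rewrite -(@root_sum _ _ _ hwp (ltn_ord m)) -(@root_sum _ _ _ hwq (ltn_ord n)).
  rewrite mulr_suml scaler_suml; apply: eq_bigr => k _.
  by rewrite mulr_sumr scaler_suml; apply: eq_bigr => l _.
under eq_bigr do under eq_bigr do rewrite H.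
rewrite (bigD1 (Ordinal hp)) //= [X in _ + X]big1 ?addr0; last first.
  move=> m hm; apply: big1 => n _.
  have -> : ((m : nat) == 0%N) = false.
    by apply/negbTE; move: hm; apply: contra => /eqP h; apply/eqP/val_inj.
  by rewrite mul0r scale0r.
rewrite (bigD1 (Ordinal hq)) //= big1 ?addr0; last first.
  move=> n hn.
  have -> : ((n : nat) == 0%N) = false.
    by apply/negbTE; move: hn; apply: contra => /eqP h; apply/eqP/val_inj.
  by rewrite mulr0 scale0r.
by rewrite scalerA -natrM mulVf ?pq_neq0 // scale1r.
Qed.


Definition Sx N (z : C) : C := \sum_(k < N) (z ^+ k / (k`!)%:R).

Lemma partial N (t : R) :
  \sum_(k < N) ((t ^+ k / (k`!)%:R)%:C *: iter k L (dyad (ket2 R p q i j) (ket2 R p q i' j'))) =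
  \sum_(k < p) \sum_(l < q) ((p * q)%:R^-1 * Sx N (t%:C * lam k l)) *: V k l.
Proof.
rewrite decomp.
under eq_bigr do rewrite (iter_V _ (fun _ _ => (p * q)%:R^-1)).
under eq_bigr do rewrite scaler_sumr.
under eq_bigr do under eq_bigr do rewrite scaler_sumr.
rewrite exchange_big; under eq_bigr do rewrite exchange_big.
apply: eq_bigr => k _; apply: eq_bigr => l _.
rewrite /Sx mulr_sumr scaler_suml; apply: eq_bigr => n _.
rewrite scalerA; congr (_ *: _).
rewrite rmorphM rmorphXn fmorphV rmorph_nat exprMn.
by rewrite mulrCA; congr (_ * _); rewrite mulrAC.
Qed.

Lemma cvg_bigsum (K : numFieldType) (W : normedModType K) n (f : 'I_n -> nat -> W) (a : 'I_n -> W) :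
  (forall k, (f k) @ \oo --> a k) -> (fun N => \sum_k f k N) @ \oo --> \sum_k a k.
Proof.
elim: n f a => [|n IH] f a h.
  under eq_cvg do rewrite big_ord0.
  rewrite big_ord0; exact: cvg_cst.
under eq_cvg do rewrite big_ord_recr.
rewrite big_ord_recr; apply: cvgD; last exact: h.
by apply: (IH (fun k => f (widen_ord (leqnSn n) k))) => k; exact: h.
Qed.

Lemma seq_cvg (t : R) :
  (fun N => \sum_(k < N) ((t ^+ k / (k`!)%:R)%:C *:
      iter k L (dyad (ket2 R p q i j) (ket2 R p q i' j'))) : MN R (p * q)) @ \oo -->
  (\sum_(k < p) \sum_(l < q) ((p * q)%:R^-1 * cexp (t%:C * lam k l)) *: V k l : MN R (p * q)).
Proof.
have -> : (fun N => \sum_(k < N) ((t ^+ k / (k`!)%:R)%:C *: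
      iter k L (dyad (ket2 R p q i j) (ket2 R p q i' j')))) =
    (fun N => \sum_(k < p) \sum_(l < q) ((p * q)%:R^-1 * Sx N (t%:C * lam k l)) *: V k l).
  by apply: funext => N; exact: partial.
apply: (@cvg_bigsum _ (MN R (p * q))) => k; apply: (@cvg_bigsum _ (MN R (p * q))) => l.
apply: cvgZr_tmp; apply: cvgMl_tmp; exact: cexp_cvg.
Qed.

Lemma Ttilde_V (t : R) :
  Ttilde alpha t (dyad (ket2 R p q i j) (ket2 R p q i' j')) =
  \sum_(k < p) \sum_(l < q) ((p * q)%:R^-1 * cexp (t%:C * lam k l)) *: V k l.
Proof. by rewrite /Ttilde; apply: opexp_cvg; exact: seq_cvg. Qed.

Lemma Ttilde_cvg (t : R) :
  (fun N => \sum_(k < N) ((t ^+ k / (k`!)%:R)%:C *: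
      iter k L (dyad (ket2 R p q i j) (ket2 R p q i' j'))) : MN R (p * q)) @ \oo -->
  (Ttilde alpha t (dyad (ket2 R p q i j) (ket2 R p q i' j')) : MN R (p * q)).
Proof. rewrite Ttilde_V; exact: seq_cvg. Qed.

Lemma iter_scale k c x : iter k L (c *: x) = c *: iter k L x.
Proof. by elim: k => [|k IH] //=; rewrite IH Ltilde_scale. Qed.

Lemma Ttilde_scaleX (t : R) c :
  Ttilde alpha t (c *: dyad (ket2 R p q i j) (ket2 R p q i' j')) =
  c *: Ttilde alpha t (dyad (ket2 R p q i j) (ket2 R p q i' j')).
Proof.
rewrite {1}/Ttilde; apply: opexp_cvg.
have -> : (fun N => \sum_(k < N) ((t ^+ k / (k`!)%:R)%:C *:
      iter k L (c *: dyad (ket2 R p q i j) (ket2 R p q i' j')))) =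
    (fun N => c *: \sum_(k < N) ((t ^+ k / (k`!)%:R)%:C *:
      iter k L (dyad (ket2 R p q i j) (ket2 R p q i' j')))).
  apply: funext => N; rewrite scaler_sumr; apply: eq_bigr => k _.
  by rewrite iter_scale !scalerA mulrC.
apply: cvgZl_tmp; exact: Ttilde_cvg.
Qed.

Lemma part1 (t : R) :
  Ttilde alpha t (dyad (ket2 R p q i j) (ket2 R p q i' j')) =
  ((p * q)%:R : C)^-1 *:
    \sum_(m < p) \sum_(n < q)
      Phi alpha wp wq (p - m)%N (q - n)%N t *:
        dyad (ket2 R p q (m + i) (n + j)) (ket2 R p q (m + i') (n + j')).
Proof.
rewrite Ttilde_V.
have HE : forall (m : 'I_p) (n : 'I_q),
  Phi alpha wp wq (p - m) (q - n) t *: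
     dyad (ket2 R p q (m + i) (n + j)) (ket2 R p q (m + i') (n + j')) =
  \sum_(k < p) \sum_(l < q) (cf R wp wq k l m n * cexp (t%:C * lam k l)) *: E m n.
  move=> m n; rewrite /Phi scaler_suml; apply: eq_bigr => k _.
  rewrite scaler_suml; apply: eq_bigr => l _.
  rewrite /cf (@wconj _ _ m k (prim_expr_order hwp) (root_mulconj _ _ _ hp hwp) (ltnW (ltn_ord m))).
  by rewrite (@wconj _ _ n l (prim_expr_order hwq) (root_mulconj _ _ _ hq hwq) (ltnW (ltn_ord n))).
under [in RHS]eq_bigr do under eq_bigr do rewrite HE.
rewrite -swap4 scaler_sumr; apply: eq_bigr => k _; rewrite scaler_sumr; apply: eq_bigr => l _.
rewrite /Vv -scalerA; congr (_ *: _).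
rewrite scaler_sumr; apply: eq_bigr => m _; rewrite scaler_sumr; apply: eq_bigr => n _.
by rewrite scalerA mulrC.
Qed.

End Main.
End Part1.

Local Open Scope classical_set_scope.
Local Open Scope ring_scope.
Local Open Scope complex_scope.

Section Tens.
Variable R : realType.
Local Notation C := (R[i]).

Lemma tens_cv_entry m n (u : 'cV[C]_m) (v : 'cV[C]_n) a c (z : 'I_(1 * 1)) :
  (tensmx u v) (mxtens_index (a, c)) z = u a 0 * v c 0.
Proof.
rewrite mxE mxtens_indexK /=.
by rewrite (ord1 (mxtens_unindex z).1) (ord1 (mxtens_unindex z).2).
Qed.

Lemma tensmxZr m n k l (A : 'M[C]_(m, n)) (B : 'M[C]_(k, l)) c :
  tensmx A (c *: B) = c *: tensmx A B.
Proof. by apply/matrixP => r s; rewrite !mxE mulrCA. Qed.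

Lemma tensmxDr m n k l (A : 'M[C]_(m, n)) (B B' : 'M[C]_(k, l)) :
  tensmx A (B + B') = tensmx A B + tensmx A B'.
Proof. by apply/matrixP => r s; rewrite !mxE mulrDr. Qed.

Lemma tensmx_sumr m n k l (A : 'M[C]_(m, n)) (I : finType) (F : I -> 'M[C]_(k, l)) :
  tensmx A (\sum_i F i) = \sum_i tensmx A (F i).
Proof.
apply/matrixP => r s; rewrite !mxE !summxE mulr_sumr.
by apply: eq_bigr => i _; rewrite !mxE.
Qed.

Lemma adj_sum m n (I : finType) (F : I -> 'M[C]_(m, n)) :
  adj (\sum_i F i) = \sum_i adj (F i).
Proof.
apply: (big_morph _ (@adjD R m n)).
by apply/matrixP => a b; rewrite !mxE rmorph0.
Qed.

Lemma sum_unindex (M : GRing.Zmodule.type) p q (F : nat -> nat -> M) :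
  \sum_(i < p) \sum_(j < q) F i j =
  \sum_(a < p * q) F (mxtens_unindex a).1 (mxtens_unindex a).2.
Proof.
rewrite pair_bigA /=.
rewrite (reindex (@mxtens_unindex p q)) //=.
exists (@mxtens_index p q) => x _; [exact: mxtens_unindexK | exact: mxtens_indexK].
Qed.

Lemma ket2_delta p q (a : 'I_(p * q)) :
  ket2 R p q (mxtens_unindex a).1 (mxtens_unindex a).2 = delta_mx a 0.
Proof.
case: (mxtens_indexP a) => a1 a2; rewrite mxtens_indexK /=.
apply/matrixP => r z; case: (mxtens_indexP r) => r1 r2.
have := @tens_cv_entry _ _ (e R p a1) (e R q a2) r1 r2 z.
rewrite /ket2 => ->; rewrite !mxE !modn_small // (ord1 z) eqxx andbT.
rewrite -natrM mulnb; congr (_%:R); congr nat_of_bool.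
by rewrite (inj_eq (can_inj (@mxtens_indexK _ _))) xpair_eqE.
Qed.

Lemma tens_dyad m n (u1 u2 : 'cV[C]_m) (w1 w2 : 'cV[C]_n) :
  (tensmx u1 w1 : 'cV_(m * n)) *m adj (tensmx u2 w2 : 'cV_(m * n)) =
  tensmx (dyad u1 u2) (dyad w1 w2).
Proof.
have := @tensmx_mul C m 1 n 1 m n u1 w1 (adj u2) (adj w2).
by rewrite -adj_tens => h; exact: h.
Qed.

Lemma dyad_delta n (a b : 'I_n) : dyad (delta_mx a 0) (delta_mx b 0) = delta_mx a b :> 'M[C]_n.
Proof.
rewrite /dyad.
have -> : adj (delta_mx b 0 : 'cV[C]_n) = delta_mx 0 b.
  by apply/matrixP => r s; rewrite !mxE conjc_nat andbC.
by rewrite mul_delta_mx.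
Qed.

End Tens.

Section Part2.
Variable R : realType.
Local Notation C := (R[i]).
Variables (p q : nat) (hp : (0 < p)%N) (hq : (0 < q)%N).
Variable alpha : 'I_p -> 'I_q -> R.
Hypothesis alpha00 : forall (i : 'I_p) (j : 'I_q),
     (i = 0 :> nat) -> (j = 0 :> nat) -> alpha i j = 0.
Variables (wp wq : C).
Hypotheses (hwp : p.-primitive_root wp) (hwq : q.-primitive_root wq).

Local Notation s0 := ((Num.sqrt ((p * q)%:R : R))^-1%:C : C).
Local Notation kap := (s0 * s0^*).
Local Notation D a b m n := (dyad (ket2 R p q (m + (mxtens_unindex a).1) (n + (mxtens_unindex a).2))
                               (ket2 R p q (m + (mxtens_unindex b).1) (n + (mxtens_unindex b).2))).

Lemma conjM (x y : C) : (x * y)^* = x^* * y^*.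
Proof. exact: rmorphM. Qed.

Lemma Omega_entry (a c : 'I_(p * q)) z :
  Omega_rho R p q (mxtens_index (a, c)) z = s0 * ((a == c)%:R).
Proof.
rewrite /Omega_rho mxE.
rewrite (@sum_unindex _ p q (fun i j => tensmx (ket2 R p q i j) (ket2 R p q i j))).
under eq_bigr do rewrite ket2_delta.
rewrite summxE; congr (_ * _).
rewrite (bigD1 a) //= big1 ?addr0.
  by rewrite tens_cv_entry !mxE !eqxx /= andbT mul1r eq_sym.
move=> a' ha'; rewrite tens_cv_entry !mxE.
by rewrite eq_sym (negbTE ha') mul0r.
Qed.

Lemma block_eq (a b : 'I_(p * q)) :
  \matrix_(c < p * q, d < p * q)
     dyad (Omega_rho R p q) (Omega_rho R p q) (mxtens_index (a, c)) (mxtens_index (b, d))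
  = kap *: delta_mx a b.
Proof.
apply/matrixP => c d; rewrite mxE /dyad mulmx_cv_rv_entry [adj _ _ _]mxE !Omega_entry conjM.
rewrite [in RHS]mxE [in RHS]mxE.
rewrite rmorph_nat mulrACA -natrM mulnb.
by rewrite [c == a]eq_sym [d == b]eq_sym.
Qed.

Lemma T_block (t : R) (a b : 'I_(p * q)) :
  Ttilde alpha t (kap *: delta_mx a b) =
  kap *: (((p * q)%:R : C)^-1 *:
    \sum_(m < p) \sum_(n < q) Phi alpha wp wq (p - m)%N (q - n)%N t *: D a b m n).
Proof.
rewrite -dyad_delta -!ket2_delta.
rewrite (Ttilde_scaleX _ _ _ hp hq _ alpha00 _ _ hwp hwq).
by rewrite (part1 _ _ _ hp hq _ alpha00 _ _ hwp hwq).
Qed.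

Lemma dyad_u (m n : nat) :
  dyad (uvec R p q m n) (uvec R p q m n) =
  kap *: \sum_(a < p * q) \sum_(b < p * q) tensmx (delta_mx a b) (D a b m n).
Proof.
rewrite /uvec (@sum_unindex _ p q (fun i j => tensmx (ket2 R p q i j) (ket2 R p q (m + i) (n + j)))).
under eq_bigr do rewrite ket2_delta.
rewrite /dyad adjZ adj_sum -scalemxAl -scalemxAr scalerA mulmx_suml.
congr (_ *: _); apply: eq_bigr => a _; rewrite mulmx_sumr; apply: eq_bigr => b _.
by rewrite tens_dyad dyad_delta.
Qed.


Lemma part2 (t : R) :
  Omega_tilde alpha t =
  ((p * q)%:R : C)^-1 *:
    \sum_(m < p) \sum_(n < q)
      Phi alpha wp wq (p - m)%N (q - n)%N t *: dyad (uvec R p q m n) (uvec R p q m n).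
Proof.
rewrite /Omega_tilde /idtens.
under eq_bigr do under eq_bigr do rewrite block_eq T_block.
under [in RHS]eq_bigr do under eq_bigr do rewrite dyad_u.
transitivity ((kap * ((p * q)%:R : C)^-1) *:
  \sum_(a < p * q) \sum_(b < p * q) \sum_(m < p) \sum_(n < q)
     Phi alpha wp wq (p - m)%N (q - n)%N t *: tensmx (delta_mx a b) (D a b m n)).
  rewrite scaler_sumr; apply: eq_bigr => a _; rewrite scaler_sumr; apply: eq_bigr => b _.
  rewrite !tensmxZr scalerA tensmx_sumr; congr (_ *: _); apply: eq_bigr => m _.
  by rewrite tensmx_sumr; apply: eq_bigr => n _; rewrite tensmxZr.
rewrite swap4 (mulrC kap) -scalerA; congr (_ *: _).
rewrite scaler_sumr; apply: eq_bigr => m _; rewrite scaler_sumr; apply: eq_bigr => n _.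
rewrite [in RHS]scalerA [in RHS]mulrC -[in RHS]scalerA; congr (_ *: _).
by rewrite scaler_sumr; apply: eq_bigr => a _; rewrite scaler_sumr.
Qed.

End Part2.

Theorem mainTheorem10 (R : realType) (p q : nat) (hp : (0 < p)%N) (hq : (0 < q)%N)
  (alpha : 'I_p -> 'I_q -> R)
  (alpha_ge0 : forall i j, 0 <= alpha i j)
  (alpha_le1 : forall i j, alpha i j <= 1)
  (alpha_sum : \sum_(i < p) \sum_(j < q) alpha i j = 1)
  (alpha00 : forall (i : 'I_p) (j : 'I_q),
     (i = 0 :> nat) -> (j = 0 :> nat) -> alpha i j = 0)
  (wp wq : R[i]) (hwp : p.-primitive_root wp) (hwq : q.-primitive_root wq) :
  (forall (i j i' j' : nat) (t : R), 0 <= t ->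
     Ttilde alpha t (dyad (ket2 R p q i j) (ket2 R p q i' j')) =
       ((p * q)%:R : R[i])^-1 *:
         \sum_(m < p) \sum_(n < q)
           Phi alpha wp wq (p - m)%N (q - n)%N t *:
             dyad (ket2 R p q (m + i) (n + j)) (ket2 R p q (m + i') (n + j')))
  /\
  (forall t : R, 0 <= t ->
     Omega_tilde alpha t =
       ((p * q)%:R : R[i])^-1 *:
         \sum_(m < p) \sum_(n < q)
           Phi alpha wp wq (p - m)%N (q - n)%N t *: dyad (uvec R p q m n) (uvec R p q m n)).
Proof.
split.
  by move=> i j i' j' t _; exact: (part1 _ _ _ hp hq _ alpha00 _ _ hwp hwq).
by move=> t _; apply: part2.
Qed.
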